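(* Let $X\subset\mathbb{R}^d$ be compact and let $K\colon\mathbb{R}\times\mathbb{R}\to\mathbb{R}$ be a continuous positive definite kernel with $|K(s,t)|\le1$. Let $Z=\mathbb{R}^d\times\mathbb{R}\times\mathbb{R}$, and for $z=(a,b,t)\in Z$ put $\psi_z(x)=K(\langle a,x\rangle+b,t)$. For a finite Borel measure $\rho$ on $Z$ let $K_\rho(x,x')=\int_Z\psi_z(x)\psi_z(x')\,d\rho(z)$. Then for every finite Borel measure $\rho$ on $Z$ and every $\epsilon>0$ there exist $z_1,\dots,z_m\in Z$ and weights $w_1,\dots,w_m\ge0$ such that $$\sup_{x,x'\in X}\Big|K_\rho(x,x')-\sum_{j=1}^m w_j\psi_{z_j}(x)\psi_{z_j}(x')\Big|<\epsilon.$$ *)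

(* Defs.v *)
From HB Require Import structures.
From mathcomp Require Import all_boot all_order all_algebra.
From mathcomp Require Import all_classical all_reals all_analysis.
Set Implicit Arguments. Unset Strict Implicit. Unset Printing Implicit Defensive.
Import Order.TTheory GRing.Theory Num.Theory.
Import numFieldNormedType.Exports.
Local Open Scope classical_set_scope.
Local Open Scope ring_scope.

Definition Zspace (R : realType) (d : nat) : Type := ('rV[R]_d * R * R)%type.

Definition ZBorel (R : realType) (d : nat) :=
  g_sigma_algebraType (@open ('rV[R]_d * R * R)%type).

Definition dotv (R : realType) (d : nat) (a x : 'rV[R]_d) : R :=
  \sum_(i < d) a 0 i * x 0 i.

Definition pos_def_kernel (R : realType) (K : R -> R -> R) : Prop :=
  (forall s t, K s t = K t s) /\
  (forall (n : nat) (t : 'I_n -> R) (c : 'I_n -> R),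
     0 <= \sum_(i < n) \sum_(j < n) c i * c j * K (t i) (t j)).

Definition psi (R : realType) (d : nat) (K : R -> R -> R)
  (z : ('rV[R]_d * R * R)%type) (x : 'rV[R]_d) : R :=
  K (dotv z.1.1 x + z.1.2) z.2.

Definition Krho (R : realType) (d : nat) (K : R -> R -> R)
  (rho : {measure set (ZBorel R d) -> \bar R}) (x x' : 'rV[R]_d) : R :=
  Rintegral rho setT (fun z : ZBorel R d => psi K z x * psi K z x').

(* Main.v *)
Require Import Defs.
From HB Require Import structures.
From mathcomp Require Import all_boot all_order all_algebra.
From mathcomp Require Import all_classical all_reals all_analysis.
Import Order.TTheory GRing.Theory Num.Theory.
Import numFieldNormedType.Exports.
Local Open Scope classical_set_scope.
Local Open Scope ring_scope.
From mathcomp Require Import finmap.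
From mathcomp Require Import ring lra.
Section S1.
Variables (R : realType) (d : nat).
Local Notation Z := ('rV[R]_d * R * R)%type.

Lemma openZ_meas (A : set Z) : open A -> measurable (A : set (ZBorel R d)).
Proof. by move=> oA; apply: sub_sigma_algebra. Qed.

Lemma contZ_meas (f : Z -> R) : continuous f ->
  measurable_fun (setT : set (ZBorel R d)) f.
Proof.
move=> /continuousP cf; apply: (measurability _ (measurable_realfun.RGenOpens.measurableE R)).
move=> _ [_ [a [b ->] <-]]; rewrite setTI; apply: openZ_meas.
exact/cf/interval_open.
Qed.
End S1.
Lemma cont_fst {U V : topologicalType} : continuous (@fst U V).
Proof. by move=> x; apply: cvg_fst. Qed.
Lemma cont_snd {U V : topologicalType} : continuous (@snd U V).
Proof. by move=> x; apply: cvg_snd. Qed.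

Lemma cont_sum {R : realType} {T : topologicalType} n (F : 'I_n -> T -> R) :
  (forall i, continuous (F i)) -> continuous (fun x => \sum_(i < n) F i x).
Proof.
elim: n F => [|n IH] F cF.
  under eq_fun do rewrite big_ord0. by move=> x; apply: cvg_cst.
under eq_fun do rewrite big_ord_recr /=.
move=> x; apply: (@continuousD _ _ _ (fun x => \sum_(i < n) F (widen_ord (leqnSn n) i) x) (F ord_max)).
  by apply: IH => i; apply: cF.
exact: cF.
Qed.

Section S.
Variables (R : realType) (d : nat) (K : R -> R -> R).
Hypothesis hKc : continuous (fun p : R * R => K p.1 p.2).
Local Notation Z := ('rV[R]_d * R * R)%type.

Let W := ('rV[R]_d * Z)%type.
Lemma dotv_cont : continuous (fun p : W => dotv p.2.1.1 p.1 + p.2.1.2).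
Proof.
move=> p; apply: (@continuousD _ _ _ (fun p : W => dotv p.2.1.1 p.1) (fun p : W => p.2.1.2)); last first.
  apply: (continuous_comp (f := fun p : W => p.2.1)); last exact: cont_snd.
  apply: (continuous_comp (f := fun p : W => p.2)); first exact: cont_snd.
  exact: cont_fst.
rewrite /dotv; apply: (@cont_sum R _ d (fun i (p : W) => p.2.1.1 0 i * p.1 0 i)) => i q.
apply: (@continuousM _ _ (fun p : W => p.2.1.1 0 i) (fun p : W => p.1 0 i)).
  apply: (continuous_comp (f := fun p : W => p.2.1.1) (g := fun M : 'rV[R]_d => M 0 i)); last exact: coord_continuous.
  apply: (continuous_comp (f := fun p : W => p.2.1)); last exact: cont_fst.
  apply: (continuous_comp (f := fun p : W => p.2)); first exact: cont_snd.
  exact: cont_fst.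
apply: (continuous_comp (f := fun p : W => p.1) (g := fun M : 'rV[R]_d => M 0 i)); last exact: coord_continuous.
exact: cont_fst.
Qed.

Lemma psi_cont : continuous (fun p : W => psi K p.2 p.1).
Proof.
move=> p; rewrite /psi.
apply: (@continuous2_cvg _ _ _ _ _ _ (fun p : W => dotv p.2.1.1 p.1 + p.2.1.2) (fun p : W => p.2.2) K); first exact: (hKc (_, _)).
  exact: dotv_cont.
apply: (continuous_comp (f := fun p : W => p.2)); first exact: cont_snd.
exact: cont_snd.
Qed.
End S.
Section S3.
Variables (R : realType) (d : nat) (K : R -> R -> R).
Local Notation Z := ('rV[R]_d * R * R)%type.
Let W := ('rV[R]_d * Z)%type.
Hypothesis psi_cont : continuous (fun p : W => psi K p.2 p.1).

Lemma tube (X : set 'rV[R]_d) (hX : compact X) (z : Z) (eta : R) : 0 < eta ->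
  \forall z' \near z, forall x, X x -> `|psi K z' x - psi K z x| < eta.
Proof.
move=> eta0.
have := (proj1 (compact_near_coveringP X) hX) Z (nbhs z)
  (fun z' x => `|psi K z' x - psi K z x| < eta) _.
apply => x Xx.
have e2 : 0 < eta / 2 by rewrite divr_gt0.
have := cvgr_dist_lt _ _ (psi_cont (x, z)) _ e2.
case=> [[A B]] /= [nA nB] sub.
exists (A, B) => //= -[x' i] /= [Ax' Bi].
have h1 := sub (x', i) (conj Ax' Bi).
have h2 := sub (x', z) (conj Ax' (nbhs_singleton nB)).
rewrite /= in h1 h2.
apply: (le_lt_trans (ler_distD (psi K z x) _ _)).
by rewrite (splitr eta) ltrD // distrC.
Qed.
End S3.
Section S4.
Variables (R : realType) (d : nat).
Local Notation Z := ('rV[R]_d * R * R)%type.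


Definition box (N : R) : set Z :=
  [set v : 'rV[R]_d | forall i, `[-N, N]%classic (v ord0 i)] `*` `[-N, N]%classic `*` `[-N, N]%classic.

Lemma box_compact N : compact (box N).
Proof.
apply: compact_setX; last exact: segment_compact.
apply: compact_setX; last exact: segment_compact.
by apply: (@rV_compact _ _ (fun=> `[-N, N]%classic)) => i; exact: segment_compact.
Qed.

Lemma box_meas N : measurable (box N : set (ZBorel R d)).
Proof.
have cl : closed (box N) := compact_closed (@norm_hausdorff R Z) (box_compact N).
have := @measurableC _ (ZBorel R d) _ (@openZ_meas R d _ (closed_openC cl)); by rewrite setCK.

Qed.

Lemma in_box_norm (N c : R) : `[-N, N]%classic c <-> `|c| <= N.
Proof. by rewrite /= in_itv /= ler_norml. Qed.

Lemma box_mono : {homo (fun n : nat => box n%:R) : n m / (n <= m)%N >-> (n <= m)%O}.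
Proof.
move=> n m nm; apply/subsetPset => -[[a b] t] /= [[Ha Hb] Ht]; split; [split|].
- move=> i; move: (Ha i); rewrite !in_box_norm => h; apply: (le_trans h).
  by rewrite ler_nat.
- move: Hb; rewrite !in_box_norm => h; apply: (le_trans h); by rewrite ler_nat.
- move: Ht; rewrite !in_box_norm => h; apply: (le_trans h); by rewrite ler_nat.
Qed.

Lemma box_cover : \bigcup_n box n%:R = setT.
Proof.
apply/seteqP; split => // -[[a b] t] _.
pose s := \sum_(i < d) `|a ord0 i| + `|b| + `|t|.
have s0 : 0 <= s by rewrite /s !addr_ge0 // sumr_ge0.
exists (Num.Def.archi_bound s) => //.
have hs := ltW (archi_boundP s0).
have Ha : forall i, `|a ord0 i| <= s.
  move=> i; rewrite /s -addrA; apply: ler_wpDr; first by rewrite addr_ge0.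
  by rewrite (bigD1 i) //= ler_wpDr // sumr_ge0.
split; [split|].
- by move=> i; rewrite in_box_norm; apply: le_trans hs; apply: Ha.
- rewrite in_box_norm; apply: le_trans hs; rewrite /s -addrA addrC -addrA.
  by apply: ler_wpDr => //; rewrite addr_ge0 // sumr_ge0.
- rewrite in_box_norm; apply: le_trans hs; rewrite /s addrC.
  by apply: ler_wpDr => //; rewrite addr_ge0 // sumr_ge0.
Qed.

Lemma tight (rho : {finite_measure set (ZBorel R d) -> \bar R}) (e : R) : 0 < e ->
  exists N : nat, (rho (~` box N%:R) < e%:E)%E.
Proof.
move=> e0.
have mF n : measurable (box n%:R : set (ZBorel R d)) by apply: box_meas.
have mU : measurable (\bigcup_n box n%:R : set (ZBorel R d)).
  by rewrite box_cover; exact: measurableT.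
have := nondecreasing_cvg_mu (mu := rho) mF mU box_mono.
rewrite box_cover.
have finT : rho [set: Z] \is a fin_num := fin_num_measure _ _ measurableT.
move=> H0; have H : (rho \o (fun n : nat => box n%:R)) x @[x --> \oo] --> rho [set: Z] := H0.
rewrite -(fineK finT) in H; move/fine_cvgP: H => [_ hc].
have [N _ HN] := cvgr_dist_lt _ _ hc _ e0.
exists N; have := HN N (leqnn N).
have finB : rho (box N%:R) \is a fin_num := fin_num_measure _ _ (mF N).
rewrite -setTD measureD //; last by rewrite ltey_eq finT.
rewrite setTI /= -(fineK finB) -(fineK finT) -EFinB lte_fin.
by move=> h; apply: le_lt_trans h; exact: ler_norm.
Qed.
End S4.
Section Int.
Context d (T : measurableType d) (R : realType).
Variable mu : {finite_measure set T -> \bar R}.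

Lemma bint (f : T -> R) (M : R) : measurable_fun setT f ->
  (forall z, `|f z| <= M) -> mu.-integrable setT (EFin \o f).
Proof.
move=> mf fM; apply: measurable_bounded_integrable => //.
  by rewrite ltey_eq fin_num_measure.
rewrite /bounded_near; near=> M' => z _ /=; apply: le_trans (fM z) _.
near: M'; exact: nbhs_pinfty_ge (num_real M).
Unshelve. all: by end_near.
Qed.

Lemma Rint_indic (C : set T) : measurable C ->
  Rintegral mu setT (\1_C) = fine (mu C).
Proof.
by move=> mC; rewrite /Rintegral integral_indic // setIT.
Qed.

Lemma Rint_sum_indic m (C : nat -> set T) (c : nat -> R) :
  (forall j, measurable (C j)) ->
  Rintegral mu setT (fun z => \sum_(j < m) \1_(C j) z * c j) =
  \sum_(j < m) fine (mu (C j)) * c j.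
Proof.
move=> mC; elim: m => [|m IH].
  rewrite big_ord0; under eq_Rintegral do rewrite big_ord0.
  by rewrite Rintegral_cst // mul0r.
have mi (n : nat) (j : nat) : measurable_fun setT (fun z => \1_(C j) z * c j).
  apply: measurable_realfun.measurable_funM => //.
have bi (j : nat) z : `|\1_(C j) z * c j| <= `|c j|.
  rewrite normrM indicE; case: (z \in C j); by rewrite ?normr1 ?normr0 ?mul1r ?mul0r.
rewrite big_ord_recr /=; under eq_Rintegral do rewrite big_ord_recr /=.
rewrite RintegralD //.
- rewrite IH RintegralZr //; first by rewrite Rint_indic.
  apply: (@bint _ 1); first exact: measurable_realfun.measurable_indic.
  by move=> z; rewrite indicE; case: (z \in C m); rewrite ?normr1 ?normr0.
- apply: (@bint _ (\sum_(j < m) `|c j|)).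
    by apply: measurable_sum => j; apply: (mi 0%N).
  move=> z; apply: le_trans (ler_norm_sum _ _ _) _.
  by apply: ler_sum => j _; apply: bi.
- apply: (@bint _ `|c m|); first exact: (mi 0%N).
  by move=> z; apply: bi.
Qed.
End Int.

Section Int2.
Context d (T : measurableType d) (R : realType).
Variable mu : {finite_measure set T -> \bar R}.
Lemma mes_sum_indic m (C : nat -> set T) (c : nat -> R) :
  (forall j, measurable (C j)) ->
  measurable_fun setT (fun z => \sum_(j < m) \1_(C j) z * c j).
Proof.
move=> mC; apply: measurable_sum => j.
by apply: measurable_realfun.measurable_funM => //.
Qed.
Lemma bnd_sum_indic m (C : nat -> set T) (c : nat -> R) z :
  `|\sum_(j < m) \1_(C j) z * c j| <= \sum_(j < m) `|c j|.
Proof.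
apply: le_trans (ler_norm_sum _ _ _) _; apply: ler_sum => j _.
rewrite normrM indicE; case: (z \in C j); by rewrite ?normr1 ?normr0 ?mul1r ?mul0r.
Qed.
End Int2.

Lemma psi_bound (R : realType) (d : nat) (K : R -> R -> R) (z : ('rV[R]_d * R * R)%type) (x : 'rV[R]_d) :
  (forall s t, `|K s t| <= 1) -> `|psi K z x| <= 1.
Proof. by move=> hKb; apply: hKb. Qed.

Lemma psi_cont_z (R : realType) (d : nat) (K : R -> R -> R)
  (hKc : continuous (fun p : R * R => K p.1 p.2)) (x : 'rV[R]_d) :
  continuous (fun z : ('rV[R]_d * R * R)%type => psi K z x).
Proof.
move=> z.
apply: (continuous_comp (f := fun z : ('rV[R]_d * R * R)%type => (x, z))
   (g := fun p : ('rV[R]_d * ('rV[R]_d * R * R))%type => psi K p.2 p.1)).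
  exact: (cvg_pair (cvg_cst x) cvg_id).
exact: psi_cont.
Qed.

Lemma g_close (R : realType) (a b a' b' : R) (eta : R) :
  `|a| <= 1 -> `|b'| <= 1 -> `|a - b| < eta -> `|a' - b'| < eta ->
  `|a * a' - b * b'| <= eta *+ 2.
Proof.
move=> ha hb h1 h2.
have -> : a * a' - b * b' = a * (a' - b') + (a - b) * b' by ring.
apply: le_trans (ler_normD _ _) _; rewrite mulr2n lerD //.
  rewrite normrM; apply: le_trans (ler_wpM2r (normr_ge0 _) ha) _.
  by rewrite mul1r ltW.
rewrite normrM; apply: le_trans (ler_wpM2l (normr_ge0 _) hb) _.
by rewrite mulr1 ltW.
Qed.

Theorem lemma2 (R : realType) (d : nat) (X : set 'rV[R]_d)
  (K : R -> R -> R)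
  (hX : compact X)
  (hKc : continuous (fun p : R * R => K p.1 p.2))
  (hKpd : pos_def_kernel K)
  (hKb : forall s t, `|K s t| <= 1)
  (rho : {finite_measure set (ZBorel R d) -> \bar R})
  (eps : R) (heps : 0 < eps) :
  exists (m : nat) (zs : 'I_m -> ZBorel R d) (w : 'I_m -> R),
    (forall j, 0 <= w j) /\
    exists2 delta : R, delta < eps &
      forall x x', X x -> X x' ->
        `| Krho K rho x x' - \sum_(j < m) w j * psi K (zs j) x * psi K (zs j) x' |
          <= delta.
Proof.
pose Z := ('rV[R]_d * R * R)%type.
pose T0 := fine (rho [set: Z]).
have T0ge : 0 <= T0 by apply: fine_ge0; apply: measure_ge0.
pose eta := eps / (8 * (T0 + 1)).
have eta0 : 0 < eta by rewrite /eta divr_gt0 // mulr_gt0 // ltr_wpDl.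
have [N HN] := @tight R d rho (eps / 4) ltac:(by rewrite divr_gt0).
pose S := box R d N%:R.
have hU : forall z : Z, exists U : set Z, [/\ open U, U z &
    forall z', U z' -> forall x, X x -> `|psi K z' x - psi K z x| < eta].
  move=> z; have := @tube R d K (@psi_cont R d K hKc) X hX z eta eta0.
  move=> H; have : nbhs z (fun z' : Z => forall x, X x -> `|psi K z' x - psi K z x| < eta) := H.
  rewrite (nbhsE z) => -[U [oU Uz] sub]; exists U; split => // z' /sub; exact.
have [Uf hUf] := choice hU.
have cS : cover_compact S :=
  eq_ind _ (fun P => P S) (box_compact R d N%:R) _
    (@compact_cover ((('rV[R]_d * R * R)%type : normedModType R) : ptopologicalType)).
have [D' D'S cov] := cS Z S Uf (fun z _ => let: And3 o _ _ := hUf z in o)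
  (fun z Sz => ex_intro2 _ _ z Sz (let: And3 _ u _ := hUf z in u)).
pose s := enum_fset D'.
pose m := size s.
pose u (j : nat) : Z := nth 0 s j.
pose C (j : nat) : set Z := (S `&` Uf (u j)) `\` \bigcup_(i in `I_j) Uf (u i).
have mU (z : Z) : measurable (Uf z : set (ZBorel R d)).
  by apply: openZ_meas; case: (hUf z).
have mC j : measurable (C j : set (ZBorel R d)).
  apply: measurableD; first by apply: measurableI; [exact: box_meas | exact: mU].
  by apply: bigcup_measurable => k _; exact: mU.
exists m, (fun j : 'I_m => u j), (fun j : 'I_m => fine (rho (C j))).
split; first by move=> j; apply: fine_ge0; apply: measure_ge0.
exists (eps / 2); first by lra.
have cellP (z : Z) : S z -> exists2 j0 : 'I_m, Uf (u j0) z &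
    forall j : 'I_m, \1_(C j) z = (j == j0)%:R :> R.
  move=> Sz; have [w Dw Uw] := cov z Sz.
  have ws : w \in s by exact: Dw.
  have ex : exists j, (j < m)%N && `[< Uf (u j) z >].
    by exists (index w s); rewrite index_mem ws /u nth_index //=; apply/asboolP.
  case: (ex_minnP ex) => j0 /andP [j0m /asboolP Uj0] jmin.
  exists (Ordinal j0m) => // j; rewrite indicE.
  have [->|neq] := eqVneq j (Ordinal j0m).
    rewrite mem_set //=; split; first by split.
    move=> [i /= ilt Ui].
    have := jmin i; rewrite (ltn_trans ilt j0m) /=.
    by move=> /(_ (asboolT Ui)); rewrite leqNgt ilt.
  rewrite memNset //= => -[[_ Uj] nb].
  have jj0 : nat_of_ord j != j0 by apply: contra neq => /eqP h; apply/eqP/val_inj.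
  case: (ltngtP j j0) => [jlt|jgt|jeq].
  - have := jmin j; rewrite ltn_ord /= => /(_ (asboolT Uj)).
    by rewrite leqNgt jlt.
  - by apply: nb; exists j0.
  - by move: jj0; rewrite jeq eqxx.
have cellN (z : Z) : ~ S z -> forall j, \1_(C j) z = 0 :> R.
  by move=> nS j; rewrite indicE memNset // => -[[]].
move=> x x' Xx Xx'.
pose g (z : Z) := psi K z x * psi K z x'.
pose c (j : nat) := g (u j).
pose h (z : Z) := \sum_(j < m) \1_(C j) z * c j.
have mg : measurable_fun (setT : set (ZBorel R d)) g.
  apply: contZ_meas => z.
  apply: (@continuousM _ _ (fun z : Z => psi K z x) (fun z : Z => psi K z x')).
    exact: psi_cont_z.
  exact: psi_cont_z.
have mh : measurable_fun (setT : set (ZBorel R d)) h.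
  exact: (@mes_sum_indic _ (ZBorel R d) R m C c mC).
have bg z : `|g z| <= 1.
  rewrite /g normrM -(mulr1 1); apply: ler_pM => //; exact: hKb.
have bh z : `|h z| <= \sum_(j < m) `|c j| by exact: (@bnd_sum_indic _ (ZBorel R d) R m C c z).
pose M := \sum_(j < m) `|c j|.
have mgh : measurable_fun (setT : set (ZBorel R d)) (fun z => g z - h z).
  exact: measurable_realfun.measurable_funB.
have bgh z : `|g z - h z| <= 1 + M.
  by apply: le_trans (ler_normB _ _) _; apply: lerD.
have ig : rho.-integrable setT (EFin \o g) := @bint _ _ _ rho g 1 mg bg.
have ih : rho.-integrable setT (EFin \o h) := @bint _ _ _ rho h _ mh bh.
have igh : rho.-integrable setT (EFin \o (fun z => g z - h z)) := @bint _ _ _ rho _ _ mgh bgh.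
have iagh : rho.-integrable setT (EFin \o (fun z => `|g z - h z|)).
  apply: (@bint _ _ _ rho _ (1 + M)); last by move=> z; rewrite normr_id.
  exact: measurableT_comp.
pose bnd (z : Z) := eta *+ 2 + \1_(~` S) z.
have mS : measurable (~` S : set (ZBorel R d)) by apply: measurableC; exact: box_meas.
have ibnd : rho.-integrable setT (EFin \o bnd).
  apply: (@bint _ _ _ rho _ (eta *+ 2 + 1)).
    by apply: measurable_realfun.measurable_funD => //; exact: measurable_cst.
  move=> z; rewrite /bnd ger0_norm; last by rewrite addr_ge0 // mulrn_wge0 // ltW.
  by rewrite lerD2l indicE; case: (_ \in _).
have pt z : `|g z - h z| <= bnd z.
  case: (pselect (S z)) => Sz.
  - have [j0 Uj0 hj] := cellP z Sz.
    have -> : h z = c j0.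
      rewrite /h (eq_bigr (fun j : 'I_m => if j == j0 then c j0 else 0)); last first.
        by move=> j _; rewrite hj; case: eqP => [->|_]; rewrite ?mul1r ?mul0r.
      by rewrite -big_mkcond big_pred1_eq.
    apply: le_trans (_ : _ <= eta *+ 2) _; last first.
      by rewrite /bnd lerDl indicE; case: (_ \in _).
    have hc := (let: And3 _ _ p := hUf (u j0) in p) z Uj0.
    by rewrite /c /g; apply: g_close; [exact: hKb | exact: hKb | exact: hc | exact: hc].
  - rewrite /h big1; last by move=> j _; rewrite cellN // mul0r.
    rewrite subr0 /bnd indicE mem_set //=.
    by apply: le_trans (bg z) _; rewrite lerDr mulrn_wge0 // ltW.
rewrite (_ : \sum_(j < m) fine (rho (C j)) * psi K (u j) x * psi K (u j) x' =
    Rintegral rho setT h); last first.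
  by rewrite Rint_sum_indic //; apply: eq_bigr => j _; rewrite /c /g mulrA.
have -> : Krho K rho x x' - Rintegral rho setT h = Rintegral rho setT (fun z => g z - h z).
  by rewrite RintegralB.
apply: le_trans (le_normr_Rintegral _ _) _ => //.
apply: le_trans (le_Rintegral _ iagh ibnd (fun z _ => pt z)) _ => //.
rewrite /bnd RintegralD //; last first.
  apply: (@bint _ _ _ rho _ 1); first exact: measurable_realfun.measurable_indic.
  by move=> z; rewrite indicE; case: (_ \in _); rewrite ?normr1 ?normr0.
  apply: (@bint _ _ _ rho _ (eta *+ 2)); first exact: measurable_cst.
  by move=> z; rewrite ger0_norm // mulrn_wge0 // ltW.
rewrite Rintegral_cst // Rint_indic //.
have finS : rho (~` S) \is a fin_num := fin_num_measure _ _ mS.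
move: HN; rewrite -/S -(fineK finS) lte_fin => HN.
have E : eta * (8 * (T0 + 1)) = eps by rewrite /eta divfK // gt_eqF // mulr_gt0 // ltr_wpDl.
rewrite -/T0 /= mulr2n.
nra.
Qed.
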